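(* Let $M$ be a nontrivial monoid in $\mathcal{C}$ and let $V=\mathbb{R}\otimes_\mathbb{Z}\mathrm{gp}(M)$. The following are equivalent: (a) $M$ is primary; (b) the only face submonoids of $M$ are $\{0\}$ and $M$; (c) $\mathsf{cone}_V(M)\setminus\{0\}$ is an open subset of $V$.
   Context: Convention: all monoids are commutative, cancellative, and reduced, written additively; $M^\bullet=M\setminus\{0\}$. $\mathcal{C}$ is the class of monoids isomorphic to a submonoid of a free commutative monoid of finite rank (equivalently, of $(\mathbb{N}^d,+)$). $M$ is regarded as a submonoid of $V$ via $M\hookrightarrow\mathrm{gp}(M)\hookrightarrow V$, and $V$ carries its Euclidean topology; $\mathsf{cone}_V(M)$ is the set of finite nonnegative linear combinations of elements of $M$. A face of a cone $C$ is a cone $F\subseteq C$ such that whenever $x,y\in C$ and $F$ meets the open segment between $x$ and $y$, then $x,y\in F$; a face submonoid is $M\cap F$ for a face $F$ of $\mathsf{cone}_V(M)$. $M$ is primary if $M$ is nontrivial and for all $x,y\in M^\bullet$ there is $n\in\mathbb{N}$ with $ny\in x+M$. *)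

(* Defs.v *)
From Stdlib Require Import Reals List Arith.
Import ListNotations.
Open Scope R_scope.

(* Elements of N^d are represented as functions nat -> nat vanishing at
   coordinates >= d; real vectors as functions nat -> R. *)
Definition natvec := nat -> nat.
Definition rvec := nat -> R.

Definition zeroN : natvec := fun _ => 0%nat.
Definition zeroR : rvec := fun _ => 0.
Definition addN (x y : natvec) : natvec := fun i => (x i + y i)%nat.
Definition smulN (n : nat) (x : natvec) : natvec := fun i => (n * x i)%nat.
Definition addR (x y : rvec) : rvec := fun i => x i + y i.
Definition smulR (a : R) (x : rvec) : rvec := fun i => a * x i.

Definition embed (x : natvec) : rvec := fun i => INR (x i).

Definition submonoid_Nd (d : nat) (M : natvec -> Prop) : Prop :=
  M zeroN /\
  (forall x y, M x -> M y -> M (addN x y)) /\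
  (forall x, M x -> forall i, (d <= i)%nat -> x i = 0%nat).

Definition nontrivial (M : natvec -> Prop) : Prop :=
  exists x, M x /\ x <> zeroN.

Definition primary (M : natvec -> Prop) : Prop :=
  nontrivial M /\
  forall x y, M x -> x <> zeroN -> M y -> y <> zeroN ->
    exists (n : nat) (z : natvec), M z /\ smulN n y = addN x z.

Definition lincomb (l : list (R * natvec)) : rvec :=
  fun i => fold_right (fun p acc => fst p * INR (snd p i) + acc) 0 l.

Definition coneM (M : natvec -> Prop) (v : rvec) : Prop :=
  exists l : list (R * natvec),
    Forall (fun p => 0 <= fst p /\ M (snd p)) l /\ v = lincomb l.

(* V = R (x) gp(M), realized as the real span of M inside R^d *)
Definition spanM (M : natvec -> Prop) (v : rvec) : Prop :=
  exists l : list (R * natvec),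
    Forall (fun p => M (snd p)) l /\ v = lincomb l.

Definition dist (d : nat) (x y : rvec) : R :=
  sqrt (fold_right Rplus 0 (map (fun i => Rsqr (x i - y i)) (seq 0 d))).

Definition is_cone (C : rvec -> Prop) : Prop :=
  (exists v, C v) /\
  (forall x y, C x -> C y -> C (addR x y)) /\
  (forall a x, 0 <= a -> C x -> C (smulR a x)).

Definition is_face (C F : rvec -> Prop) : Prop :=
  is_cone F /\ (forall v, F v -> C v) /\
  forall x y, C x -> C y ->
    (exists t, 0 < t < 1 /\ F (addR (smulR (1 - t) x) (smulR t y))) ->
    F x /\ F y.

Definition face_submonoid (M N : natvec -> Prop) : Prop :=
  exists F, is_face (coneM M) F /\ forall x, N x <-> (M x /\ F (embed x)).

Definition open_in_V (d : nat) (M : natvec -> Prop) (S : rvec -> Prop) : Prop :=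
  (forall v, S v -> spanM M v) /\
  forall x, S x -> exists eps, 0 < eps /\
    forall y, spanM M y -> dist d x y < eps -> S y.

(* Main.v *)
Require Import Defs.
From Stdlib Require Import Reals List Arith.
From Stdlib Require Import Lra Lia ZArith Classical FunctionalExtensionality.
Import ListNotations.
Open Scope R_scope.
Local Notation dist := Defs.dist.

Fixpoint sumk (n:nat) (f:nat->R) : R :=
  match n with O => 0 | S n' => sumk n' f + f n' end.

Lemma sumk_ext n f g : (forall j, (j<n)%nat -> f j = g j) -> sumk n f = sumk n g.
Proof. induction n; simpl; intros H; auto. rewrite IHn by (intros; apply H; lia). rewrite H by lia. auto. Qed.

Lemma sumk_shift n f : sumk (S n) f = f O + sumk n (fun j => f (S j)).
Proof. induction n; simpl in *. lra. rewrite IHn. lra. Qed.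

Lemma sumk_plus n f g : sumk n (fun j => f j + g j) = sumk n f + sumk n g.
Proof. induction n; simpl; lra. Qed.

Lemma sumk_scal n c f : sumk n (fun j => c * f j) = c * sumk n f.
Proof. induction n; simpl; [ring| rewrite IHn; ring]. Qed.

Lemma sumk_zero n : sumk n (fun _ => 0) = 0.
Proof. induction n; simpl; lra. Qed.

Lemma sumk_nonneg n f : (forall j, (j<n)%nat -> 0 <= f j) -> 0 <= sumk n f.
Proof. induction n; simpl; intros H. lra. assert (0 <= f n) by (apply H; lia).
  assert (0 <= sumk n f) by (apply IHn; intros; apply H; lia). lra. Qed.

Lemma sumk_le n f g : (forall j, (j<n)%nat -> f j <= g j) -> sumk n f <= sumk n g.
Proof. induction n; simpl; intros H. lra. assert (f n <= g n) by (apply H; lia).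
  assert (sumk n f <= sumk n g) by (apply IHn; intros; apply H; lia). lra. Qed.

Lemma sumk_abs n f : Rabs (sumk n f) <= sumk n (fun j => Rabs (f j)).
Proof. induction n; simpl. rewrite Rabs_R0; lra.
  eapply Rle_trans. apply Rabs_triang. lra. Qed.

Lemma sumk_term n f j : (j < n)%nat -> (forall i, (i<n)%nat -> 0 <= f i) -> f j <= sumk n f.
Proof. induction n; simpl; intros Hj H. lia.
  destruct (Nat.eq_dec j n). subst. assert (0 <= sumk n f) by (apply sumk_nonneg; intros; apply H; lia). lra.
  assert (f j <= sumk n f) by (apply IHn; [lia| intros; apply H; lia]). assert (0<= f n) by (apply H; lia). lra. Qed.

Ltac fext := apply functional_extensionality; intro.

Lemma lincomb_nil : lincomb [] = zeroR.
Proof. reflexivity. Qed.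

Lemma lincomb_cons p l i : lincomb (p::l) i = fst p * INR (snd p i) + lincomb l i.
Proof. reflexivity. Qed.

Lemma lincomb_app l1 l2 : lincomb (l1 ++ l2) = addR (lincomb l1) (lincomb l2).
Proof. fext. unfold addR. induction l1; simpl app. change (lincomb [] x) with 0. ring.
  rewrite !lincomb_cons, IHl1. ring. Qed.

Lemma lincomb_scale a l : lincomb (map (fun p => (a * fst p, snd p)) l) = smulR a (lincomb l).
Proof. fext. unfold smulR. induction l; simpl map. change (lincomb [] x) with 0. ring.
  rewrite !lincomb_cons, IHl. simpl. ring. Qed.

Lemma coneM_zero M : coneM M zeroR.
Proof. exists []. split; auto. Qed.

Lemma coneM_add M x y : coneM M x -> coneM M y -> coneM M (addR x y).
Proof. intros [l1 [H1 ->]] [l2 [H2 ->]]. exists (l1++l2). split.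
  apply Forall_app; auto. symmetry; apply lincomb_app. Qed.

Lemma coneM_scale M a x : 0 <= a -> coneM M x -> coneM M (smulR a x).
Proof. intros Ha [l [H ->]]. exists (map (fun p => (a * fst p, snd p)) l). split.
  rewrite Forall_map. eapply Forall_impl; [|exact H]. simpl. intros p [? ?]. split; auto.
  apply Rmult_le_pos; auto. symmetry; apply lincomb_scale. Qed.

Lemma coneM_embed (M : natvec -> Prop) m : M m -> coneM M (embed m).
Proof. intros H. exists [(1, m)]. split. constructor; simpl; auto. split; [lra|auto].
  fext. unfold lincomb, embed; simpl. ring. Qed.

Lemma coneM_eq M x y : x = y -> coneM M x -> coneM M y.
Proof. intros ->; auto. Qed.

Lemma spanM_add M x y : spanM M x -> spanM M y -> spanM M (addR x y).
Proof. intros [l1 [H1 ->]] [l2 [H2 ->]]. exists (l1++l2). split.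
  apply Forall_app; auto. symmetry; apply lincomb_app. Qed.

Lemma spanM_scale M a x : spanM M x -> spanM M (smulR a x).
Proof. intros [l [H ->]]. exists (map (fun p => (a * fst p, snd p)) l). split.
  rewrite Forall_map. eapply Forall_impl; [|exact H]. simpl. auto.
  symmetry; apply lincomb_scale. Qed.

Lemma coneM_spanM M x : coneM M x -> spanM M x.
Proof. intros [l [H ->]]. exists l. split; auto. eapply Forall_impl; [|exact H]. simpl; tauto. Qed.

Lemma lincomb_nonneg (M : natvec -> Prop) l i : Forall (fun p => 0 <= fst p /\ M (snd p)) l -> 0 <= lincomb l i.
Proof. induction 1. change (lincomb [] i) with 0. lra. rewrite lincomb_cons.
  destruct H. pose proof (pos_INR (snd x i)). assert (0 <= fst x * INR (snd x i)) by (apply Rmult_le_pos; auto). lra. Qed.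

Lemma coneM_nonneg M v i : coneM M v -> 0 <= v i.
Proof. intros [l [H ->]]. eapply lincomb_nonneg; eauto. Qed.

Lemma Rabs_le_inv a b : Rabs a <= b -> -b <= a <= b.
Proof. unfold Rabs; destruct (Rcase_abs a); intros; lra. Qed.

Lemma fold_map_seq f a n : fold_right Rplus 0 (map f (seq a n)) = sumk n (fun j => f (a+j)%nat).
Proof. revert a; induction n; intros a. simpl. auto.
  rewrite (sumk_shift n (fun j => f (a+j)%nat)). simpl seq. simpl map. simpl fold_right.
  rewrite IHn. rewrite Nat.add_0_r.
  rewrite (sumk_ext n (fun j => f (S a + j)%nat) (fun j => f (a + S j)%nat)) by (intros; f_equal; lia).
  reflexivity. Qed.

Lemma dist_sumk d x y : dist d x y = sqrt (sumk d (fun i => Rsqr (x i - y i))).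
Proof. unfold dist. rewrite fold_map_seq. reflexivity. Qed.

Lemma dist_coord d x y i : (i < d)%nat -> Rabs (x i - y i) <= dist d x y.
Proof. intros Hi. rewrite dist_sumk. rewrite <- sqrt_Rsqr_abs. apply sqrt_le_1_alt.
  apply (sumk_term d (fun i => Rsqr (x i - y i))); auto. intros; apply Rle_0_sqr. Qed.

Lemma dist_scaled d x y a w : (forall i, x i - y i = a * w i) ->
  dist d x y = Rabs a * sqrt (sumk d (fun i => Rsqr (w i))).
Proof. intros H. rewrite dist_sumk.
  rewrite (sumk_ext d _ (fun i => Rsqr a * Rsqr (w i))) by (intros; rewrite H; unfold Rsqr; ring).
  rewrite sumk_scal. rewrite sqrt_mult_alt by apply Rle_0_sqr. rewrite sqrt_Rsqr_abs. auto. Qed.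

Lemma embed_nonzero x : x <> zeroN -> embed x <> zeroR.
Proof. intros H E. apply H. fext. assert (embed x x0 = zeroR x0) by (rewrite E; auto).
  unfold embed, zeroR in H0. unfold zeroN. apply INR_eq. simpl. auto. Qed.

Lemma embed_zero : embed zeroN = zeroR.
Proof. reflexivity. Qed.

Lemma face_zero C F : is_face C F -> F zeroR.
Proof. intros [[[v Hv] [_ Hs]] _]. replace zeroR with (smulR 0 v). apply Hs; auto; lra.
  fext. unfold smulR, zeroR. ring. Qed.

Lemma c_to_b d M : submonoid_Nd d M ->
  open_in_V d M (fun v => coneM M v /\ v <> zeroR) ->
  forall N, face_submonoid M N ->
        (forall x, N x <-> x = zeroN) \/ (forall x, N x <-> M x).
Proof.
  intros Hsub [Hspan Hopen] N [F [HF HN]].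
  pose proof (face_zero _ _ HF) as HF0.
  destruct Hsub as [HM0 [HMadd HMsupp]].
  destruct (classic (exists x, N x /\ x <> zeroN)) as [[x [Nx Hx0]] | Hno].
  - right. intros m. split. intros Hm; apply HN in Hm; tauto.
    intros Mm. apply HN. split; auto.
    apply HN in Nx. destruct Nx as [Mx Fx].
    destruct (Hopen (embed x)) as [eps [Heps Hball]].
    { split. apply coneM_embed; auto. apply embed_nonzero; auto. }
    set (s := sqrt (sumk d (fun i => Rsqr (embed m i)))).
    assert (Hs : 0 <= s) by apply sqrt_pos.
    set (del := eps / (2 * (s + 1))).
    assert (Hdel : 0 < del) by (unfold del; apply Rdiv_lt_0_compat; lra).
    set (w := addR (embed x) (smulR (- del) (embed m))).
    assert (Hw : coneM M w).
    { apply Hball.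
      - unfold w. apply spanM_add. apply coneM_spanM, coneM_embed; auto.
        apply spanM_scale. apply coneM_spanM, coneM_embed; auto.
      - rewrite (dist_scaled d _ _ del (embed m)).
        rewrite Rabs_right by lra. fold s. unfold del.
        apply Rle_lt_trans with (eps / (2 * (s+1)) * (s+1)). apply Rmult_le_compat_l; [fold del; lra | lra].
        replace (eps / (2 * (s + 1)) * (s + 1)) with (eps/2) by (field; lra). lra.
        intros i. unfold w, addR, smulR. ring. }
    destruct HF as [Hcone [Hsubset Hface]].
    assert (Hb : F (smulR (2 * del) (embed m)) ).
    { eapply (proj2 (Hface (smulR 2 w) (smulR (2*del) (embed m)) _ _ _)).
      Unshelve.
      apply coneM_scale; auto; lra. apply coneM_scale. lra. apply coneM_embed; auto.
      exists (1/2). split. lra.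
      replace (addR (smulR (1 - 1/2) (smulR 2 w)) (smulR (1/2) (smulR (2 * del) (embed m)))) with (embed x); auto.
      fext. unfold w, addR, smulR. field. }
    replace (embed m) with (smulR (/ (2*del)) (smulR (2 * del) (embed m))).
    apply Hcone; auto. left. apply Rinv_0_lt_compat. lra.
    fext. unfold smulR. field. lra.
  - left. intros z. split.
    + intros Nz. apply NNPP. intros Hz. apply Hno. eauto.
    + intros ->. apply HN. split; auto.
Qed.

Definition isQ (r:R) := exists p q : Z, IZR q <> 0 /\ r = IZR p / IZR q.

Lemma isQ_Z z : isQ (IZR z).
Proof. exists z, 1%Z. split. simpl; lra. simpl. field. Qed.

Lemma isQ_plus a b : isQ a -> isQ b -> isQ (a + b).
Proof. intros [p1 [q1 [H1 ->]]] [p2 [q2 [H2 ->]]]. exists (p1*q2 + p2*q1)%Z, (q1*q2)%Z.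
  rewrite plus_IZR, !mult_IZR. split. apply Rmult_integral_contrapositive; auto. field; auto. Qed.

Lemma isQ_mult a b : isQ a -> isQ b -> isQ (a * b).
Proof. intros [p1 [q1 [H1 ->]]] [p2 [q2 [H2 ->]]]. exists (p1*p2)%Z, (q1*q2)%Z.
  rewrite !mult_IZR. split. apply Rmult_integral_contrapositive; auto. field; auto. Qed.

Lemma isQ_opp a : isQ a -> isQ (- a).
Proof. intros [p1 [q1 [H1 ->]]]. exists (- p1)%Z, q1. rewrite opp_IZR. split; auto. field; auto. Qed.

Lemma isQ_inv a : isQ a -> a <> 0 -> isQ (/ a).
Proof. intros [p1 [q1 [H1 ->]]] Ha. exists q1, p1. assert (IZR p1 <> 0).
  { intros E. apply Ha. rewrite E. unfold Rdiv. ring. }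
  split; auto. field; auto. Qed.

Lemma isQ_minus a b : isQ a -> isQ b -> isQ (a - b).
Proof. intros. apply isQ_plus; auto. apply isQ_opp; auto. Qed.

Lemma isQ_div a b : isQ a -> isQ b -> b <> 0 -> isQ (a / b).
Proof. intros. apply isQ_mult; auto. apply isQ_inv; auto. Qed.

Lemma isQ_sumk n f : (forall j, (j<n)%nat -> isQ (f j)) -> isQ (sumk n f).
Proof. induction n; simpl; intros H. apply (isQ_Z 0). apply isQ_plus. apply IHn; intros; apply H; lia. apply H; lia. Qed.

Definition dot (k:nat) (e u : nat -> R) := sumk k (fun j => e j * u j).
Definition ratvec k (e:nat->R) := forall j, (j<k)%nat -> isQ (e j).

Lemma dot_lin k f e c u : dot k (fun j => f j - c * e j) u = dot k f u - c * dot k e u.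
Proof. unfold dot. rewrite <- sumk_scal.
  replace (sumk k (fun j => f j * u j) - sumk k (fun j => c * (e j * u j)))
  with (sumk k (fun j => f j * u j) + sumk k (fun j => - (c * (e j * u j)))).
  rewrite <- sumk_plus. apply sumk_ext. intros; ring.
  rewrite (sumk_ext k (fun j => - (c * (e j * u j))) (fun j => -1 * (c * (e j * u j)))) by (intros; ring).
  rewrite sumk_scal. ring. Qed.

Lemma dot_scal_u k e c u : dot k e (fun j => c * u j) = c * dot k e u.
Proof. unfold dot. rewrite <- sumk_scal. apply sumk_ext; intros; ring. Qed.

Definition upd (u : nat -> R) p del := fun j => if Nat.eqb j p then u j + del else u j.

Lemma dot_upd k f u p del : dot k f (upd u p del) = dot k f u + (if Nat.ltb p k then f p * del else 0).
Proof. unfold dot, upd. induction k; simpl. lra. rewrite IHk.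
  destruct (Nat.eqb k p) eqn:E.
  - apply Nat.eqb_eq in E. subst. assert (Nat.ltb p p = false) by (apply Nat.ltb_ge; lia).
    assert (Nat.ltb p (S p) = true) by (apply Nat.ltb_lt; lia). rewrite H, H0. ring.
  - apply Nat.eqb_neq in E. destruct (Nat.ltb p k) eqn:E1.
    + apply Nat.ltb_lt in E1. assert (Nat.ltb p (S k) = true) by (apply Nat.ltb_lt; lia). rewrite H. ring.
    + apply Nat.ltb_ge in E1. assert (Nat.ltb p (S k) = false) by (apply Nat.ltb_ge; lia). rewrite H. ring.
Qed.

Lemma dot_zero_e k e u : (forall j, (j<k)%nat -> e j = 0) -> dot k e u = 0.
Proof. intros H. unfold dot. rewrite (sumk_ext k _ (fun _ => 0)). apply sumk_zero. intros; rewrite H; auto; ring. Qed.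

Lemma dot_perturb k g u u' del : 0 <= del -> (forall j, (j<k)%nat -> Rabs (u' j - u j) <= del) ->
  Rabs (dot k g u' - dot k g u) <= del * sumk k (fun j => Rabs (g j)).
Proof. intros Hd H. unfold dot.
  replace (sumk k (fun j => g j * u' j) - sumk k (fun j => g j * u j)) with (sumk k (fun j => g j * (u' j - u j))).
  eapply Rle_trans. apply sumk_abs. rewrite <- sumk_scal. apply sumk_le. intros j Hj.
  rewrite Rabs_mult. rewrite Rmult_comm. apply Rmult_le_compat_r. apply Rabs_pos. auto.
  rewrite (sumk_ext k (fun j => g j * (u' j - u j)) (fun j => g j * u' j + (-1) * (g j * u j))) by (intros; ring).
  rewrite sumk_plus, sumk_scal. ring. Qed.

Lemma approx_delta k u I : Forall (fun g => dot k g u > 0) I ->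
  exists del, 0 < del /\ forall u', (forall j, (j<k)%nat -> Rabs (u' j - u j) <= del) ->
     Forall (fun g => dot k g u' > 0) I.
Proof. induction 1. exists 1. split. lra. auto.
  destruct IHForall as [d1 [Hd1 H1]].
  set (S := sumk k (fun j => Rabs (x j))).
  assert (HS : 0 <= S) by (apply sumk_nonneg; intros; apply Rabs_pos).
  set (d2 := dot k x u / (2 * (S + 1))).
  assert (Hd2 : 0 < d2) by (unfold d2; apply Rdiv_lt_0_compat; lra).
  exists (Rmin d1 d2). split. apply Rmin_glb_lt; auto.
  intros u' Hu'. constructor.
  - assert (Hu2 : forall j, (j<k)%nat -> Rabs (u' j - u j) <= d2).
    { intros. eapply Rle_trans. apply Hu'; auto. apply Rmin_r. }
    pose proof (dot_perturb k x u u' d2 ltac:(lra) Hu2) as Hp. fold S in Hp.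
    assert (d2 * S < dot k x u).
    { apply Rle_lt_trans with (d2 * (S+1)). apply Rmult_le_compat_l; lra.
      unfold d2. replace (dot k x u / (2 * (S + 1)) * (S + 1)) with (dot k x u / 2) by (field; lra). lra. }
    apply Rabs_le_inv in Hp. lra.
  - apply H1. intros. eapply Rle_trans. apply Hu'; auto. apply Rmin_l.
Qed.

Lemma rational_approx k u del : 0 < del -> exists u', ratvec k u' /\ forall j, (j<k)%nat -> Rabs (u' j - u j) <= del.
Proof. intros Hd. destruct (archimed_cor1 del Hd) as [N [HN HN0]].
  assert (HNr : 0 < INR N) by (apply lt_0_INR; auto).
  exists (fun j => IZR (up (u j * INR N)) / INR N). split.
  - intros j _. apply isQ_div. apply isQ_Z. rewrite INR_IZR_INZ. apply isQ_Z. lra.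
  - intros j _. destruct (archimed (u j * INR N)) as [A B].
    apply Rabs_le. split.
    + apply Rle_trans with 0. lra.
      apply Rle_trans with ((u j * INR N) / INR N - u j). right; field; lra.
      unfold Rminus. apply Rplus_le_compat_r. unfold Rdiv. apply Rmult_le_compat_r. left; apply Rinv_0_lt_compat; lra. lra.
    + apply Rle_trans with (/ INR N); [|lra].
      apply Rle_trans with ((u j * INR N + 1) / INR N - u j).
      unfold Rminus. apply Rplus_le_compat_r. unfold Rdiv. apply Rmult_le_compat_r. left; apply Rinv_0_lt_compat; lra. lra.
      right. field. lra.
Qed.

Lemma rational_solution_n k n : forall (E : list (nat->R)) (I : list (nat->R)) (u:nat->R),
  length E = n ->
  Forall (ratvec k) E -> Forall (ratvec k) I ->
  Forall (fun e => dot k e u = 0) E -> Forall (fun g => dot k g u > 0) I ->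
  exists u', ratvec k u' /\ Forall (fun e => dot k e u' = 0) E /\ Forall (fun g => dot k g u' > 0) I.
Proof.
  induction n as [|n IH]; intros [|e E] I u Hlen HE HI He Hg; simpl in Hlen; try lia.
  - destruct (approx_delta k u I Hg) as [del [Hd H]].
    destruct (rational_approx k u del Hd) as [u' [Hq Hu']].
    exists u'. split; auto.
  - inversion HE as [|? ? He0 HE']; subst. inversion He as [|? ? He1 He']; subst.
    destruct (classic (exists p, (p<k)%nat /\ e p <> 0)) as [[p [Hp Hep]] | Hno].
    + set (tr := fun f : nat -> R => fun j => f j - (f p / e p) * e j).
      assert (Htr : forall f v, dot k e v = 0 -> dot k (tr f) v = dot k f v).
      { intros f v Hv. unfold tr. rewrite dot_lin, Hv. ring. }
      assert (Htrq : forall f, ratvec k f -> ratvec k (tr f)).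
      { intros f Hf j Hj. unfold tr. apply isQ_minus. auto. apply isQ_mult; auto.
        apply isQ_div; auto. }
      destruct (IH (map tr E) (map tr I) u) as [u'' [Hq [HE'' HI'']]].
      * rewrite length_map. lia.
      * rewrite Forall_map. eapply Forall_impl; [|exact HE']. auto.
      * rewrite Forall_map. eapply Forall_impl; [|exact HI]. auto.
      * rewrite Forall_map. eapply Forall_impl; [|exact He']. intros f Hf. rewrite Htr; auto.
      * rewrite Forall_map. eapply Forall_impl; [|exact Hg]. intros f Hf. rewrite Htr; auto.
      * set (del := - dot k e u'' / e p).
        assert (Hlt : Nat.ltb p k = true) by (apply Nat.ltb_lt; auto).
        assert (Hup : forall f, dot k f (upd u'' p del) = dot k f u'' + f p * del).
        { intros f. rewrite dot_upd, Hlt. auto. }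
        assert (Hez : dot k e (upd u'' p del) = 0).
        { rewrite Hup. unfold del. field. auto. }
        assert (Htrp : forall f, tr f p = 0). { intros f. unfold tr. field. auto. }
        assert (Hkey : forall f, dot k f (upd u'' p del) = dot k (tr f) u'').
        { intros f. rewrite <- (Htr f _ Hez). rewrite Hup, Htrp. ring. }
        exists (upd u'' p del). split; [|split].
        -- intros j Hj. unfold upd. destruct (Nat.eqb j p). apply isQ_plus; auto.
           unfold del. apply isQ_div; auto. apply isQ_opp. apply isQ_sumk. intros. apply isQ_mult; auto.
           auto.
        -- constructor; auto. rewrite Forall_map in HE''. eapply Forall_impl; [|exact HE''].
           intros f Hf. rewrite Hkey; auto.
        -- rewrite Forall_map in HI''. eapply Forall_impl; [|exact HI''].
           intros f Hf. rewrite Hkey; auto.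
    + destruct (IH E I u) as [u' [Hq [H1 H2]]]; auto.
      exists u'. split; auto. split; auto. constructor; auto.
      apply dot_zero_e. intros j Hj. apply NNPP. intros Hne. apply Hno. eauto.
Qed.

Lemma rational_solution k : forall (E : list (nat->R)) (I : list (nat->R)) (u:nat->R),
  Forall (ratvec k) E -> Forall (ratvec k) I ->
  Forall (fun e => dot k e u = 0) E -> Forall (fun g => dot k g u > 0) I ->
  exists u', ratvec k u' /\ Forall (fun e => dot k e u' = 0) E /\ Forall (fun g => dot k g u' > 0) I.
Proof. intros. eapply rational_solution_n; eauto. Qed.

Lemma common_denom k u : ratvec k u -> exists D : Z, (0 < D)%Z /\ forall j, (j<k)%nat -> exists z, IZR D * u j = IZR z.
Proof. induction k; intros H.
  - exists 1%Z. split. lia. intros; lia.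
  - destruct IHk as [D [HD Hz]]. intros j Hj; apply H; lia.
    destruct (H k ltac:(lia)) as [p [q [Hq Hu]]].
    assert (q <> 0%Z) by (intros ->; apply Hq; auto).
    exists (D * q * q)%Z. split. assert (0 < q*q)%Z by nia. nia.
    intros j Hj. destruct (Nat.eq_dec j k). subst.
    + exists (D * q * p)%Z. rewrite Hu, !mult_IZR. field. auto.
    + destruct (Hz j ltac:(lia)) as [z Hzz]. exists (z * q * q)%Z. rewrite !mult_IZR.
      rewrite <- Hzz. ring.
Qed.

Definition d0 : R * natvec := (0, zeroN).

Lemma lincomb_sumk l i : lincomb l i = sumk (length l) (fun j => fst (nth j l d0) * INR (snd (nth j l d0) i)).
Proof. induction l. reflexivity. rewrite lincomb_cons. simpl length. rewrite sumk_shift. simpl. rewrite IHl. auto. Qed.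

Lemma dot_SS L e w : dot (S (S L)) e w = e 0%nat * w 0%nat + e 1%nat * w 1%nat + sumk L (fun j => e (S (S j)) * w (S (S j))).
Proof. unfold dot. rewrite sumk_shift. rewrite sumk_shift. ring. Qed.

Definition unitv (j:nat) : nat -> R := fun m => if Nat.eqb m j then 1 else 0.

Lemma dot_unit k j u : (j < k)%nat -> dot k (unitv j) u = u j.
Proof. unfold dot, unitv. induction k; intros H. lia. simpl.
  destruct (Nat.eq_dec j k).
  - subst. rewrite Nat.eqb_refl. rewrite (sumk_ext k _ (fun _ => 0)). rewrite sumk_zero. ring.
    intros m Hm. assert (Nat.eqb m k = false) by (apply Nat.eqb_neq; lia). rewrite H0. ring.
  - rewrite IHk by lia. assert (Nat.eqb k j = false) by (apply Nat.eqb_neq; lia). rewrite H0. ring.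
Qed.

Lemma INR_isQ n : isQ (INR n).
Proof. rewrite INR_IZR_INZ. apply isQ_Z. Qed.

Definition posf (p : R * natvec) : bool := if Rlt_dec 0 (fst p) then true else false.

Lemma lincomb_filter l i : Forall (fun p => 0 <= fst p) l -> lincomb (filter posf l) i = lincomb l i.
Proof. induction 1. reflexivity. simpl filter. unfold posf at 1. destruct (Rlt_dec 0 (fst x)).
  rewrite !lincomb_cons, IHForall. auto. rewrite lincomb_cons, IHForall. assert (fst x = 0) by lra.
  rewrite H1. ring. Qed.

Lemma smulN_M d M n x : submonoid_Nd d M -> M x -> M (smulN n x).
Proof. intros [H0 [Hadd _]] Hx. induction n.
  - exact H0.
  -   replace (smulN (S n) x) with (addN x (smulN n x)). apply Hadd; auto. apply functional_extensionality; intros; reflexivity. Qed.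

Fixpoint zsum (l : list (R * natvec)) (n : nat -> nat) : natvec :=
  match l with [] => zeroN | p :: l' => addN (smulN (n O) (snd p)) (zsum l' (fun j => n (S j))) end.

Lemma zsum_M d M l n : submonoid_Nd d M -> Forall (fun p => M (snd p)) l -> M (zsum l n).
Proof. intros Hs HF. revert n. induction HF; intros n; simpl. apply Hs.
  apply Hs. apply smulN_M with d; auto. auto. Qed.

Lemma zsum_INR l n i : INR (zsum l n i) = sumk (length l) (fun j => INR (n j) * INR (snd (nth j l d0) i)).
Proof. revert n; induction l; intros n. reflexivity. simpl zsum. unfold addN at 1, smulN at 1. rewrite plus_INR, mult_INR, IHl.
  simpl length. rewrite sumk_shift. simpl. auto. Qed.

Lemma int_to_nat r z : r = IZR z -> 0 < r -> INR (Z.to_nat (up r - 1)) = r.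
Proof. intros -> Hp. rewrite <- (tech_up (IZR z) (z+1)). replace (z + 1 - 1)%Z with z by lia.
  rewrite INR_IZR_INZ. rewrite Z2Nat.id. auto. apply le_IZR. lra.
  rewrite plus_IZR. lra. rewrite plus_IZR. lra. Qed.

Lemma dot_ext k e u v : (forall j, (j<k)%nat -> u j = v j) -> dot k e u = dot k e v.
Proof. intros H. unfold dot. apply sumk_ext. intros; rewrite H; auto. Qed.

Lemma integralize d M x y lam l : submonoid_Nd d M -> M x -> M y -> x <> zeroN ->
  Forall (fun p => 0 <= fst p /\ M (snd p)) l ->
  (forall i, lam * INR (y i) - INR (x i) = lincomb l i) ->
  exists n z, M z /\ smulN n y = addN x z.
Proof.
  intros Hs Mx My Hx0 Hl Heq.
  set (l' := filter posf l).
  assert (Hl' : Forall (fun p => 0 < fst p /\ M (snd p)) l').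
  { unfold l'. rewrite Forall_forall in *. intros p Hp. apply filter_In in Hp as [Hp Hpos].
    unfold posf in Hpos. destruct (Rlt_dec 0 (fst p)); try discriminate. split; auto. apply Hl; auto. }
  assert (Heq' : forall i, lam * INR (y i) - INR (x i) = lincomb l' i).
  { intros i. unfold l'. rewrite lincomb_filter. auto. eapply Forall_impl; [|exact Hl]. simpl; tauto. }
  assert (Hlam : 0 < lam).
  { destruct (classic (exists i, x i <> 0%nat)) as [[i Hi] | Hno].
    - assert (0 < INR (x i)) by (apply lt_0_INR; lia).
      assert (0 <= lincomb l' i).
      { apply lincomb_nonneg with (M:=M). eapply Forall_impl; [|exact Hl']; simpl; intros p [? ?]; split; auto; lra. }
      pose proof (Heq' i). pose proof (pos_INR (y i)).
      destruct (Rle_or_lt lam 0); auto. nra.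
    - exfalso. apply Hx0. apply functional_extensionality. intros i. apply NNPP. intros H. apply Hno. exists i. auto. }
  set (L := length l').
  set (k := S (S L)).
  set (u := fun j => match j with 0%nat => lam | 1%nat => 1 | S (S j') => fst (nth j' l' d0) end).
  set (e := fun i j => match j with 0%nat => INR (y i) | 1%nat => - INR (x i) | S (S j') => - INR (snd (nth j' l' d0) i) end).
  assert (Hedot : forall i v, dot k (e i) v = INR (y i) * v 0%nat - INR (x i) * v 1%nat - sumk L (fun j => INR (snd (nth j l' d0) i) * v (S (S j)))).
  { intros i v. unfold k. rewrite dot_SS.
    replace (sumk L (fun j => e i (S (S j)) * v (S (S j)))) with (-1 * sumk L (fun j => INR (snd (nth j l' d0) i) * v (S (S j)))).
    unfold e; ring.
    rewrite <- sumk_scal. apply sumk_ext. intros; unfold e; ring. }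
  assert (HE : forall i, dot k (e i) u = 0).
  { intros i. rewrite Hedot. pose proof (Heq' i) as H. rewrite lincomb_sumk in H. fold L in H.
    assert (H0 : sumk L (fun j => INR (snd (nth j l' d0) i) * u (S (S j))) = sumk L (fun j => fst (nth j l' d0) * INR (snd (nth j l' d0) i))).
    { apply sumk_ext; intros; unfold u; simpl; ring. }
    rewrite H0. change (u 0%nat) with lam. change (u 1%nat) with 1. lra. }
  assert (HEq : forall i, ratvec k (e i)).
  { intros i j Hj. unfold e. destruct j as [|[|j']]. apply INR_isQ. apply isQ_opp, INR_isQ. apply isQ_opp, INR_isQ. }
  assert (Hupos : forall j, (j<k)%nat -> 0 < u j).
  { intros j Hj. unfold u. destruct j as [|[|j']]. auto. lra.
    rewrite Forall_forall in Hl'. apply Hl'. apply nth_In. unfold k,L in Hj; lia. }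
  destruct (rational_solution k (map e (seq 0 d)) (map unitv (seq 0 k)) u) as [u' [Hq [HE' HI']]].
  { rewrite Forall_map, Forall_forall. intros; apply HEq. }
  { rewrite Forall_map, Forall_forall. intros j _ m _. unfold unitv. destruct (Nat.eqb m j).
    apply (isQ_Z 1). apply (isQ_Z 0). }
  { rewrite Forall_map, Forall_forall. intros; apply HE. }
  { rewrite Forall_map, Forall_forall. intros j Hj. apply in_seq in Hj. rewrite dot_unit by lia. apply Rlt_gt, Hupos. lia. }
  assert (Hu'pos : forall j, (j<k)%nat -> 0 < u' j).
  { intros j Hj. rewrite Forall_map, Forall_forall in HI'. rewrite <- (dot_unit k j u') by auto. apply HI'.
    apply in_seq. lia. }
  destruct (common_denom k u' Hq) as [D [HD Hz]].
  assert (HDr : 0 < IZR D) by (apply IZR_lt; auto).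
  set (nn := fun j => Z.to_nat (up (IZR D * u' j) - 1)).
  assert (Hnn : forall j, (j<k)%nat -> INR (nn j) = IZR D * u' j).
  { intros j Hj. destruct (Hz j Hj) as [z Hzz]. unfold nn. apply (int_to_nat _ z); auto.
    apply Rmult_lt_0_compat; auto. }
  assert (Heqn : forall i, (i < d)%nat -> INR (y i) * INR (nn 0%nat) - INR (x i) * INR (nn 1%nat) - sumk L (fun j => INR (snd (nth j l' d0) i) * INR (nn (S (S j)))) = 0).
  { intros i Hi. transitivity (dot k (e i) (fun j => INR (nn j))). rewrite Hedot. reflexivity. rewrite (dot_ext k (e i) _ (fun j => IZR D * u' j)) by auto.
    rewrite dot_scal_u. rewrite Forall_map, Forall_forall in HE'. rewrite HE'. ring. apply in_seq; lia. }
  assert (Hn1 : (0 < nn 1%nat)%nat).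
  { destruct (nn 1%nat) eqn:E. exfalso. pose proof (Hnn 1%nat ltac:(unfold k; lia)). rewrite E in H. simpl in H.
    pose proof (Hu'pos 1%nat ltac:(unfold k; lia)). nra. lia. }
  set (z := addN (smulN (nn 1%nat - 1) x) (zsum l' (fun j => nn (S (S j))))).
  assert (Mz : M z).
  { unfold z. apply Hs. apply smulN_M with d; auto. apply zsum_M with d; auto.
    eapply Forall_impl; [|exact Hl']; simpl; tauto. }
  exists (nn 0%nat), z. split; auto.
  apply functional_extensionality. intros i. unfold smulN at 1. unfold addN at 1.
  destruct (lt_dec i d) as [Hi|Hi].
  - apply INR_eq. unfold z, addN. rewrite mult_INR, !plus_INR. unfold smulN. rewrite mult_INR, zsum_INR, minus_INR by lia.
    fold L. pose proof (Heqn i Hi) as H.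
    replace (sumk L (fun j => INR (nn (S (S j))) * INR (snd (nth j l' d0) i))) with (sumk L (fun j => INR (snd (nth j l' d0) i) * INR (nn (S (S j))))).
    change (INR 1) with 1. nra. apply sumk_ext; intros; ring.
  - destruct Hs as [_ [_ Hsupp]]. rewrite (Hsupp y My i), (Hsupp x Mx i), (Hsupp z Mz i) by lia. lia.
Qed.

Lemma b_to_a d M : submonoid_Nd d M -> nontrivial M ->
  (forall N, face_submonoid M N ->
        (forall x, N x <-> x = zeroN) \/ (forall x, N x <-> M x)) -> primary M.
Proof.
  intros Hs Hnt Hb. split; auto. intros x y Mx Hx0 My Hy0.
  set (F := fun v => coneM M v /\ exists lam, coneM M (addR (smulR lam (embed y)) (smulR (-1) v))).
  assert (HF : is_face (coneM M) F).
  { split; [split; [|split]|split].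
    - exists zeroR. split. apply coneM_zero. exists 0. eapply coneM_eq; [|apply coneM_zero].
      apply functional_extensionality; intros; unfold addR, smulR, zeroR; ring.
    - intros a b [Ca [la Ha]] [Cb [lb Hb']]. split. apply coneM_add; auto.
      exists (la + lb). eapply coneM_eq; [|apply (coneM_add _ _ _ Ha Hb')].
      apply functional_extensionality; intros; unfold addR, smulR; ring.
    - intros a v Ha [Cv [lv Hv]]. split. apply coneM_scale; auto.
      exists (a * lv). eapply coneM_eq; [|apply (coneM_scale _ a _ Ha Hv)].
      apply functional_extensionality; intros; unfold addR, smulR; ring.
    - intros v [Cv _]; auto.
    - intros a b Ca Cb [t [Ht [Cp [lp Hp]]]]. split; split; auto.
      + exists (lp / (1 - t)).
        eapply coneM_eq; [|apply (coneM_scale _ (/ (1-t))); [left; apply Rinv_0_lt_compat; lra| apply (coneM_add _ _ _ Hp (coneM_scale _ t _ ltac:(lra) Cb))]].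
        apply functional_extensionality; intros; unfold addR, smulR; field; lra.
      + exists (lp / t).
        eapply coneM_eq; [|apply (coneM_scale _ (/ t)); [left; apply Rinv_0_lt_compat; lra| apply (coneM_add _ _ _ Hp (coneM_scale _ (1-t) _ ltac:(lra) Ca))]].
        apply functional_extensionality; intros; unfold addR, smulR; field; lra. }
  destruct (Hb (fun z => M z /\ F (embed z))) as [Htriv | Hall].
  - exists F. split; auto. tauto.
  - exfalso. apply Hy0. apply Htriv. split; auto. split. apply coneM_embed; auto.
    exists 1. eapply coneM_eq; [|apply coneM_zero].
    apply functional_extensionality; intros; unfold addR, smulR, zeroR; ring.
  - pose proof Mx as Mx2. apply Hall in Mx2 as [_ [_ [lam [l [Hl Hleq]]]]].
    apply (integralize d M x y lam l); auto.
    intros i. rewrite <- Hleq. unfold addR, smulR, embed. ring.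
Qed.

Definition supp (d:nat) (v : rvec) := forall i, (d <= i)%nat -> v i = 0.
Definition nrm (d:nat) (v : rvec) := sumk d (fun i => Rabs (v i)).
Definition lc (l : list (R * rvec)) : rvec := fun i => fold_right (fun p acc => fst p * snd p i + acc) 0 l.
Definition spanS (S : rvec -> Prop) (v : rvec) := exists l, Forall (fun p => S (snd p)) l /\ v = lc l.
Fixpoint comb (B : list rvec) (a : nat -> R) : rvec :=
  match B with [] => zeroR | b :: B' => fun i => a O * b i + comb B' (fun k => a (S k)) i end.
Definition cn (n:nat) (a : nat -> R) := sumk n (fun k => Rabs (a k)).

Lemma Rdiv_le_0_compat a b : 0 <= a -> 0 < b -> 0 <= a / b.
Proof. intros. unfold Rdiv. apply Rmult_le_pos; auto. left; apply Rinv_0_lt_compat; auto. Qed.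

Lemma lc_cons p l i : lc (p :: l) i = fst p * snd p i + lc l i.
Proof. reflexivity. Qed.

Lemma nrm_S n v : nrm (S n) v = nrm n v + Rabs (v n).
Proof. reflexivity. Qed.

Lemma nrm_nonneg n v : 0 <= nrm n v.
Proof. apply sumk_nonneg. intros; apply Rabs_pos. Qed.

Lemma coord_le_nrm n v i : (i < n)%nat -> Rabs (v i) <= nrm n v.
Proof. intros H. apply (sumk_term n (fun i => Rabs (v i))); auto. intros; apply Rabs_pos. Qed.

Lemma nrm_f n v w a : nrm n (fun i => v i - a * w i) <= nrm n v + Rabs a * nrm n w.
Proof. unfold nrm. rewrite <- sumk_scal, <- sumk_plus. apply sumk_le. intros j _.
  eapply Rle_trans. unfold Rminus. apply Rabs_triang. rewrite Rabs_Ropp, Rabs_mult. lra. Qed.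

Lemma cn_S n a : cn (S n) a = Rabs (a O) + cn n (fun k => a (S k)).
Proof. unfold cn. rewrite sumk_shift. auto. Qed.

Lemma cn_nonneg n a : 0 <= cn n a.
Proof. apply sumk_nonneg. intros; apply Rabs_pos. Qed.

Definition RT (T : list rvec) (j : nat) := fold_right (fun t acc => Rabs (t j) + acc) 0 T.

Lemma RT_nonneg T j : 0 <= RT T j.
Proof. induction T; simpl. lra. pose proof (Rabs_pos (a j)). lra. Qed.

Lemma comb_bound T b j : Rabs (comb T b j) <= cn (length T) b * RT T j.
Proof. revert b; induction T; intros b; simpl. unfold zeroR, cn; simpl. rewrite Rabs_R0; lra.
  rewrite cn_S. eapply Rle_trans. apply Rabs_triang. rewrite Rabs_mult.
  pose proof (IHT (fun k => b (S k))). pose proof (Rabs_pos (b O)). pose proof (Rabs_pos (a j)).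
  pose proof (cn_nonneg (length T) (fun k => b (S k))). pose proof (RT_nonneg T j). nra. Qed.

Lemma lc_zero_supp d S l : (forall v, S v -> supp d v) -> Forall (fun p => S (snd p)) l -> supp d (lc l).
Proof. intros HS. induction 1; intros i Hi. reflexivity. rewrite lc_cons, IHForall by auto.
  rewrite (HS _ H i Hi). ring. Qed.

Lemma comb_map_f (f : rvec -> rvec) (c : nat) T b :
  (forall v w i, f (fun i => v i + w i) i = f v i + f w i) -> (forall a v i, f (fun i => a * v i) i = a * f v i) ->
  (forall i, f zeroR i = 0) ->
  forall i, comb (map f T) b i = f (comb T b) i.
Proof. intros Hadd Hsc H0. revert b; induction T; intros b i; simpl. rewrite H0; auto.
  rewrite IHT. replace (comb (a :: T) b) with (fun i => (fun i => b O * a i) i + comb T (fun k => b (S k)) i) by reflexivity.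
  rewrite Hadd. rewrite Hsc. auto. Qed.

Lemma lc_map_lin d c s0 l i : lc (map (fun p => (fst p, fun i => snd p i - (snd p d / c) * s0 i)) l) i = lc l i - (lc l d / c) * s0 i.
Proof. induction l. simpl map. change (lc [] i) with 0. change (lc [] d) with 0. unfold Rdiv. ring.
  simpl map. rewrite !lc_cons, IHl. destruct a as [r w]. simpl. unfold Rdiv. ring. Qed.

Lemma list_choice (S : rvec -> Prop) (f : rvec -> rvec) B :
  Forall (fun b => exists s, S s /\ b = f s) B -> exists T, Forall S T /\ B = map f T.
Proof. induction 1. exists []. auto. destruct H as [s [Hs ->]]. destruct IHForall as [T [HT ->]].
  exists (s :: T). split; auto. Qed.

Lemma sumk_const n c : sumk n (fun _ => c) = INR n * c.
Proof. induction n. simpl; ring. rewrite S_INR. simpl. rewrite IHn. ring. Qed.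

Lemma BR : forall d (S : rvec -> Prop), (forall v, S v -> supp d v) ->
  exists B, Forall S B /\ exists K, 0 <= K /\ forall v, spanS S v ->
     exists a, v = comb B a /\ cn (length B) a <= K * nrm d v.
Proof.
  induction d as [|d IH]; intros S HS.
  - exists []. split; auto. exists 0. split. lra. intros v [l [Hl ->]].
    exists (fun _ => 0). split. apply functional_extensionality. intros i. simpl. apply (lc_zero_supp 0 S); auto. lia.
    simpl. unfold cn; simpl. lra.
  - destruct (classic (forall s, S s -> s d = 0)) as [Hall | Hex].
    + destruct (IH S) as [B [HB [K [HK Hrep]]]].
      { intros v Hv i Hi. destruct (Nat.eq_dec i d). subst; auto. apply (HS v Hv). lia. }
      exists B. split; auto. exists K. split; auto. intros v Hv. destruct (Hrep v Hv) as [a [Ha Hb]].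
      exists a. split; auto. rewrite nrm_S. pose proof (Rabs_pos (v d)). nra.
    + assert (exists s0, S s0 /\ s0 d <> 0) as [s0 [Hs0 Hc]].
      { apply NNPP. intros Hn. apply Hex. intros s Hs. apply NNPP. intros Hne. apply Hn. eauto. }
      set (c := s0 d) in *.
      set (f := fun v : rvec => fun i => v i - (v d / c) * s0 i).
      set (S' := fun w => exists s, S s /\ w = f s).
      destruct (IH S') as [B' [HB' [K' [HK' Hrep]]]].
      { intros w [s [Hs ->]] i Hi. unfold f. destruct (Nat.eq_dec i d). subst. fold c. field. auto.
        rewrite (HS s Hs i), (HS s0 Hs0 i) by lia. ring. }
      destruct (list_choice S f B' HB') as [T [HT ->]].
      set (R := RT T d).
      set (N0 := nrm (Datatypes.S d) s0).
      set (Q := K' * (1 + N0 / Rabs c)).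
      assert (Hcpos : 0 < Rabs c) by (apply Rabs_pos_lt; auto).
      assert (HN0 : 0 <= N0) by apply nrm_nonneg.
      assert (HR : 0 <= R) by apply RT_nonneg.
      assert (HQ : 0 <= Q). { unfold Q. apply Rmult_le_pos; auto. assert (0 <= N0 / Rabs c) by (apply Rdiv_le_0_compat; lra). lra. }
      exists (s0 :: T). split. constructor; auto.
      exists (/ Rabs c + Q * (R / Rabs c + 1)). split.
      { assert (0 <= R / Rabs c) by (apply Rdiv_le_0_compat; lra). assert (0 < / Rabs c) by (apply Rinv_0_lt_compat; lra). nra. }
      intros v [l [Hl ->]].
      set (v := lc l).
      assert (Hfv : spanS S' (f v)).
      { exists (map (fun p => (fst p, f (snd p))) l). split.
        - rewrite Forall_map. eapply Forall_impl; [|exact Hl]. simpl. intros p Hp. exists (snd p); auto.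
        - unfold v, f. apply functional_extensionality. intros i. symmetry. apply lc_map_lin. }
      destruct (Hrep (f v) Hfv) as [b [Hb Hbb]].
      rewrite length_map in Hbb.
      assert (Hcomb : forall i, comb (map f T) b i = f (comb T b) i).
      { apply comb_map_f; intros; unfold f, zeroR; try field; auto. }
      exists (fun k => match k with O => (v d - comb T b d) / c | Datatypes.S k' => b k' end).
      split.
      * apply functional_extensionality. intros i. simpl.
        assert (Hi : f v i = comb (map f T) b i) by (rewrite Hb; auto).
        rewrite Hcomb in Hi. unfold f in Hi.
        replace (comb T (fun k => b k) i) with (comb T b i) by reflexivity.
        apply (f_equal (fun r => r + (v d / c) * s0 i)) in Hi.
        replace (v i) with (v i - v d / c * s0 i + v d / c * s0 i) by ring. rewrite Hi. field. auto.
      * simpl length. rewrite cn_S. simpl.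
        replace (cn (length T) (fun k => b k)) with (cn (length T) b) by reflexivity.
        set (nv := nrm (Datatypes.S d) v).
        assert (Hnv : 0 <= nv) by apply nrm_nonneg.
        assert (Hvd : Rabs (v d) <= nv) by (apply coord_le_nrm; lia).
        set (ic := / Rabs c).
        assert (Hic : 0 < ic) by (apply Rinv_0_lt_compat; lra).
        assert (Hdiv : forall r, Rabs (r / c) = Rabs r * ic).
        { intros r. unfold Rdiv, ic. rewrite Rabs_mult, Rabs_inv. auto. }
        assert (H1 : nrm d (f v) <= nv * (1 + N0 * ic)).
        { apply Rle_trans with (nrm (Datatypes.S d) (f v)).
          rewrite nrm_S. pose proof (Rabs_pos (f v d)). lra.
          unfold f. eapply Rle_trans. apply nrm_f. fold v N0. fold nv. rewrite Hdiv.
          assert (Rabs (v d) * ic * N0 <= nv * ic * N0).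
          { apply Rmult_le_compat_r; auto. apply Rmult_le_compat_r; lra. }
          nra. }
        assert (H2 : cn (length T) b <= Q * nv).
        { eapply Rle_trans. exact Hbb. unfold Q. fold ic.
          replace (N0 / Rabs c) with (N0 * ic) by reflexivity.
          replace (K' * (1 + N0 * ic) * nv) with (K' * (nv * (1 + N0 * ic))) by ring.
          apply Rmult_le_compat_l; auto. }
        assert (H3 : Rabs (comb T b d) <= Q * nv * R).
        { eapply Rle_trans. apply comb_bound. fold R. apply Rmult_le_compat_r; auto. }
        rewrite Hdiv.
        assert (H4 : Rabs (v d - comb T b d) <= nv + Q * nv * R).
        { unfold Rminus. eapply Rle_trans. apply Rabs_triang. rewrite Rabs_Ropp. lra. }
        replace (R / Rabs c) with (R * ic) by reflexivity.
        assert (Rabs (v d - comb T b d) * ic <= (nv + Q * nv * R) * ic) by (apply Rmult_le_compat_r; lra).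
        nra.
Qed.

Definition S0 (M : natvec -> Prop) (v : rvec) := exists m, M m /\ v = embed m.

Lemma lc_embed l i : lc (map (fun p => (fst p, embed (snd p))) l) i = lincomb l i.
Proof. induction l. reflexivity. simpl map. rewrite lc_cons, lincomb_cons, IHl. destruct a; reflexivity. Qed.

Lemma spanM_to_spanS M w : spanM M w -> spanS (S0 M) w.
Proof. intros [l [Hl ->]]. exists (map (fun p => (fst p, embed (snd p))) l). split.
  rewrite Forall_map. eapply Forall_impl; [|exact Hl]. intros p Hp. exists (snd p). auto.
  apply functional_extensionality. intros i. symmetry. apply lc_embed. Qed.

Lemma lincomb_supp d M l i : submonoid_Nd d M -> Forall (fun p => 0 <= fst p /\ M (snd p)) l -> (d <= i)%nat -> lincomb l i = 0.
Proof. intros [_ [_ Hs]]. induction 1; intros Hi. reflexivity. rewrite lincomb_cons, IHForall by auto.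
  destruct H. rewrite (Hs _ H1 i Hi). simpl. ring. Qed.

Lemma decompose M l : Forall (fun p => 0 <= fst p /\ M (snd p)) l -> lincomb l <> zeroR ->
  exists c y rest, 0 < c /\ M y /\ y <> zeroN /\ coneM M rest /\ lincomb l = addR (smulR c (embed y)) rest.
Proof. induction 1; intros Hne. exfalso; apply Hne; reflexivity.
  destruct H as [Hc My].
  destruct (classic (0 < fst x /\ snd x <> zeroN)) as [[Hc' Hy] | Hno].
  - exists (fst x), (snd x), (lincomb l). split; [auto|split; [auto|split;[auto|split]]]. exists l. auto.
    apply functional_extensionality. intros i. rewrite lincomb_cons. reflexivity.
  - assert (Hz : forall i, fst x * INR (snd x i) = 0).
    { intros i. destruct (Req_dec (fst x) 0) as [E|E]. rewrite E; ring.
      assert (snd x = zeroN). { apply NNPP. intros Hn. apply Hno. split; auto. lra. }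
      rewrite H. simpl. ring. }
    assert (Heq : lincomb (x :: l) = lincomb l).
    { apply functional_extensionality. intros i. rewrite lincomb_cons, Hz. ring. }
    rewrite Heq in *. apply IHForall; auto.
Qed.

Lemma Nm_exists M y B : primary M -> M y -> y <> zeroN -> Forall (S0 M) B ->
  exists Nm, 0 <= Nm /\ Forall (fun b => coneM M (addR (smulR Nm (embed y)) (smulR (-1) b))) B.
Proof. intros Hp My Hy. induction 1. exists 0. split. lra. constructor.
  destruct IHForall as [N1 [HN1 HF]]. destruct H as [m [Mm ->]].
  assert (exists n : R, 0 <= n /\ coneM M (addR (smulR n (embed y)) (smulR (-1) (embed m)))) as [n [Hn Hcn]].
  { destruct (classic (m = zeroN)) as [->|Hm].
    - exists 0. split. lra. eapply coneM_eq; [|apply coneM_zero]. apply functional_extensionality; intros; unfold addR, smulR, embed, zeroR, zeroN; simpl; ring.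
    - destruct Hp as [_ Hp]. destruct (Hp m y Mm Hm My Hy) as [n [z [Mz Hz]]].
      exists (INR n). split. apply pos_INR. eapply coneM_eq; [|apply (coneM_embed M z Mz)].
      apply functional_extensionality; intros i. unfold addR, smulR, embed.
      assert (Hq0 : INR (smulN n y i) = INR (addN m z i)) by (rewrite Hz; auto).
      unfold smulN, addN in Hq0. cbv beta in Hq0. rewrite mult_INR, plus_INR in Hq0. lra. }
  exists (N1 + n). split. lra. constructor.
  - eapply coneM_eq; [|apply (coneM_add _ _ _ Hcn (coneM_scale M N1 (embed y) HN1 (coneM_embed M y My)))].
    apply functional_extensionality; intros; unfold addR, smulR; ring.
  - eapply Forall_impl; [|exact HF]. intros b Hb.
    eapply coneM_eq; [|apply (coneM_add _ _ _ Hb (coneM_scale M n (embed y) Hn (coneM_embed M y My)))].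
    apply functional_extensionality; intros; unfold addR, smulR; ring.
Qed.

Lemma comb_cone M y B Nm : M y -> 0 <= Nm -> Forall (S0 M) B ->
  Forall (fun b => coneM M (addR (smulR Nm (embed y)) (smulR (-1) b))) B ->
  forall a, coneM M (addR (comb B a) (smulR (Nm * cn (length B) a) (embed y))).
Proof. intros My HNm H0. induction H0 as [|b B Hb HB IH]; intros HF a; inversion HF as [|? ? Hb' HF']; subst.
  - simpl. eapply coneM_eq; [|apply coneM_zero]. apply functional_extensionality; intros; unfold addR, smulR, zeroR, cn; simpl; ring.
  - specialize (IH HF' (fun k => a (S k))).
    assert (Hterm : coneM M (addR (smulR (a O) b) (smulR (Nm * Rabs (a O)) (embed y)))).
    { destruct Hb as [m [Mm ->]]. destruct (Rle_dec 0 (a O)).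
      + rewrite Rabs_right by lra. apply coneM_add. apply coneM_scale; auto. apply coneM_embed; auto.
        apply coneM_scale. apply Rmult_le_pos; auto. apply coneM_embed; auto.
      + rewrite Rabs_left by lra. eapply coneM_eq; [|apply (coneM_scale M (- a O) _ ltac:(lra) Hb')].
        apply functional_extensionality; intros; unfold addR, smulR; ring. }
    eapply coneM_eq; [|apply (coneM_add _ _ _ Hterm IH)].
    apply functional_extensionality; intros i. unfold addR, smulR. simpl length. rewrite cn_S. simpl. ring.
Qed.

Lemma a_to_c d M : submonoid_Nd d M -> primary M -> open_in_V d M (fun v => coneM M v /\ v <> zeroR).
Proof.
  intros Hs Hp. split. intros v [Hv _]. apply coneM_spanM; auto.
  intros x [Cx Hx0].
  destruct (BR d (S0 M)) as [B [HB [K [HK Hrep]]]].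
  { intros v [m [Mm ->]] i Hi. unfold embed. destruct Hs as [_ [_ Hsu]]. rewrite (Hsu m Mm i Hi). reflexivity. }
  destruct Cx as [l [Hl Hxl]].
  destruct (decompose M l Hl) as [c [y [rest [Hc [My [Hy0 [Crest Hdec]]]]]]]. rewrite <- Hxl; auto.
  destruct (Nm_exists M y B Hp My Hy0 HB) as [Nm [HNm HFB]].
  assert (exists i0, (i0 < d)%nat /\ x i0 <> 0) as [i0 [Hi0 Hxi0]].
  { apply NNPP. intros Hn. apply Hx0. apply functional_extensionality. intros i. unfold zeroR.
    destruct (lt_dec i d). apply NNPP. intros Hne. apply Hn. eauto.
    rewrite Hxl. apply (lincomb_supp d M l i Hs Hl). lia. }
  assert (Hax : 0 < Rabs (x i0)) by (apply Rabs_pos_lt; auto).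
  set (den := (Nm + 1) * (K + 1) * (INR d + 1)).
  assert (Hden : 0 < den). { unfold den. pose proof (pos_INR d). apply Rmult_lt_0_compat. apply Rmult_lt_0_compat; lra. lra. }
  exists (Rmin (Rabs (x i0)) (c / den)). split.
  { apply Rmin_glb_lt; auto. apply Rdiv_lt_0_compat; auto. }
  intros v Hv Hdist.
  assert (Hd1 : dist d x v < Rabs (x i0)) by (eapply Rlt_le_trans; [exact Hdist| apply Rmin_l]).
  assert (Hd2 : dist d x v < c / den) by (eapply Rlt_le_trans; [exact Hdist| apply Rmin_r]).
  split.
  2:{ intros E. pose proof (dist_coord d x v i0 Hi0). rewrite E in H, Hd1. unfold zeroR in H, Hd1.
      rewrite Rminus_0_r in H. lra. }
  set (w := addR v (smulR (-1) x)).
  assert (Hw : spanM M w).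
  { apply spanM_add; auto. apply spanM_scale. apply coneM_spanM. exists l; auto. }
  destruct (Hrep w (spanM_to_spanS M w Hw)) as [a [Ha Hab]].
  assert (Hnw : nrm d w <= INR d * (c / den)).
  { unfold nrm. rewrite <- sumk_const. apply sumk_le. intros j Hj.
    pose proof (dist_coord d x v j Hj). unfold w, addR, smulR.
    replace (v j + -1 * x j) with (- (x j - v j)) by ring. rewrite Rabs_Ropp. lra. }
  set (s := Nm * cn (length B) a).
  assert (Hsc : s <= c).
  { unfold s. assert (Hcn : cn (length B) a <= K * (INR d * (c / den))).
    { eapply Rle_trans. exact Hab. apply Rmult_le_compat_l; auto. }
    pose proof (cn_nonneg (length B) a).
    assert (Nm * cn (length B) a <= Nm * (K * (INR d * (c / den)))) by (apply Rmult_le_compat_l; auto).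
    assert (Nm * (K * (INR d * (c / den))) <= c).
    { replace (Nm * (K * (INR d * (c / den)))) with (c * ((Nm * K * INR d) / den)) by (field; lra).
      assert ((Nm * K * INR d) / den <= 1).
      { apply Rmult_le_reg_r with den; auto. unfold Rdiv. rewrite Rmult_assoc, Rinv_l by lra.
        unfold den. pose proof (pos_INR d). assert (0 <= Nm * K) by (apply Rmult_le_pos; auto).
        assert (0 <= Nm * K * INR d) by (apply Rmult_le_pos; auto). nra. }
      nra. }
    lra. }
  pose proof (comb_cone M y B Nm My HNm HB HFB a) as Hca.
  eapply coneM_eq; [|apply (coneM_add _ _ _ (coneM_add _ _ _ (coneM_scale M (c - s) (embed y) ltac:(lra) (coneM_embed M y My)) Crest) Hca)].
  apply functional_extensionality; intros i. fold s.
  assert (Hwi : w i = comb B a i) by (rewrite Ha; auto).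
  unfold w, addR, smulR in Hwi. rewrite Hxl, Hdec in Hwi. unfold addR, smulR in *. lra.
Qed.


Theorem mainTheorem13 (d : nat) (M : natvec -> Prop) :
  submonoid_Nd d M -> nontrivial M ->
  (primary M <->
     (forall N, face_submonoid M N ->
        (forall x, N x <-> x = zeroN) \/ (forall x, N x <-> M x))) /\
  ((forall N, face_submonoid M N ->
        (forall x, N x <-> x = zeroN) \/ (forall x, N x <-> M x)) <->
     open_in_V d M (fun v => coneM M v /\ v <> zeroR)).
Proof.
  intros Hs Hnt. split; split.
  - intros Hp. apply (c_to_b d); auto. apply a_to_c; auto.
  - intros Hb. apply b_to_a with d; auto.
  - intros Hb. apply a_to_c; auto. apply b_to_a with d; auto.
  - intros Hc. apply (c_to_b d); auto.
Qed.
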